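(* Let $b\ge1$, $q\ge2$, $n\ge b+1$ and $i\in[1,n-b+1]$. Then \[ |\{\boldsymbol{x}\in\Sigma_q^n: |\mathcal{D}_{1,b}(\boldsymbol{x})|=i\}|=q^b(q-1)^{i-1}\binom{n-b}{i-1}. \]
   Context: $\Sigma_q=\{0,\ldots,q-1\}$. A $b$-burst-deletion at position $i\in[1,n-b+1]$ transforms $x_1\cdots x_n$ into $x_1\cdots x_{i-1}x_{i+b}\cdots x_n$. $\mathcal{D}_{1,b}(\boldsymbol{x})$ is the set of all length-$(n-b)$ sequences obtainable from $\boldsymbol{x}$ by one $b$-burst-deletion. *)

(* Defs.v *)
From mathcomp Require Import all_boot.
Set Implicit Arguments. Unset Strict Implicit. Unset Printing Implicit Defensive.

(* Sigma_q = 'I_q; a sequence x in Sigma_q^n is a tuple of length n.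
   burst_del b i x : remove the b symbols x_i .. x_{i+b-1} (1-indexed i),
   i.e. x_1 ... x_{i-1} x_{i+b} ... x_n. *)
Definition burst_del (T : Type) (b i : nat) (x : seq T) : seq T :=
  take i.-1 x ++ drop (i.-1 + b) x.

Definition D1b (T : eqType) (b : nat) (x : seq T) : seq (seq T) :=
  undup [seq burst_del b i x | i <- iota 1 (size x - b + 1)].

(* Main.v *)
Require Import Defs.
From mathcomp Require Import all_boot.
From mathcomp Require Import zify.
Set Implicit Arguments. Unset Strict Implicit. Unset Printing Implicit Defensive.

Section S.
Variables (T : eqType) (x0 : T) (c : nat).
Local Notation b := c.+1.

Lemma iotaS1 m n : iota m.+1 n = map succn (iota m n).
Proof. by rewrite -add1n iotaDl. Qed.

Lemma iota0S k : iota 0 k.+1 = 0 :: map succn (iota 0 k).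
Proof. by rewrite -iotaS1. Qed.

Definition L (x : seq T) := [seq take i x ++ drop (i + b) x | i <- iota 0 (size x - b).+1].
Definition cnt (x : seq T) :=
  count (fun k => nth x0 x k != nth x0 x (k + b)) (iota 0 (size x - b)).

Arguments L : simpl never.
Arguments cnt : simpl never.

Lemma D1bE x : D1b b x = undup (L x).
Proof.
rewrite /D1b /L addn1 -[1]/(1 + 0) iotaDl -map_comp; try congr undup.
Qed.

Lemma L_cons a y : b <= size y ->
  L (a :: y) = drop b (a :: y) :: map (cons a) (L y).
Proof.
move=> hy; rewrite /L [size (a :: y)]/= subSn // iota0S map_cons -map_comp.
congr (_ :: _); rewrite -map_comp; apply: eq_map => i /=.
by [].
Qed.

Lemma cnt_cons a y : b <= size y ->
  cnt (a :: y) = (a != nth x0 y c) + cnt y.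
Proof.
move=> hy; rewrite /cnt [size (a :: y)]/= subSn // iota0S /= count_map.
congr (_ + _); apply: eq_count => k /=.
Qed.

Lemma size_undup_cons (u : seq T) s :
  size (undup (u :: s)) = (u \notin s) + size (undup s).
Proof. by rewrite /=; case: (u \in s). Qed.

Lemma sizeL x : b <= size x -> size (undup (L x)) = (cnt x).+1.
Proof.
elim: x => [|a y IH] // hx; rewrite /= in hx.
have [hy|hy] := leqP b (size y).
  rewrite L_cons // cnt_cons // size_undup_cons undup_map_inj; last by move=> u v [].
  rewrite size_map IH //.
  have -> : (drop b (a :: y) \in [seq a :: s | s <- L y]) = (a == nth x0 y c).
    apply/idP/idP.
      case/mapP => s _ e.
      by have := congr1 (nth x0 ^~ 0) e; rewrite nth_drop addn0 /= => ->.
    move/eqP=> ->; apply/mapP; exists (drop b y); last by rewrite /= -drop_nth.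
    rewrite /L; apply/mapP; exists 0 => //.
  by rewrite add0n take0.
  by rewrite addnS.
have e : size y = c by apply/eqP; rewrite eqn_leq; apply/andP; split; [exact: hy | exact: hx].
by rewrite /L /cnt /= e subnn.
Qed.
End S.

Lemma card_sum (U : finType) (P : pred U) : #|[set x | P x]| = \sum_x (P x : nat).
Proof.
rewrite -sum1_card big_mkcond /=; apply: eq_bigr => x _; rewrite inE.
by case: (P x).
Qed.

Lemma sum_tuple_cons (T : finType) n (F : n.+1.-tuple T -> nat) :
  \sum_(t : n.+1.-tuple T) F t = \sum_(a : T) \sum_(t : n.-tuple T) F [tuple of a :: t].
Proof.
rewrite pair_big /=.
rewrite (reindex (fun p : T * n.-tuple T => [tuple of p.1 :: p.2])) /=.
  by apply: eq_bigr => -[a t].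
exists (fun t : n.+1.-tuple T => (thead t, [tuple of behead t])).
  by move=> [a t] _ /=; congr (_, _); apply: val_inj.
by move=> t _ /=; rewrite [RHS]tuple_eta.
Qed.

Section C.
Variables (T : finType) (x0 : T) (c : nat).
Local Notation b := c.+1.

Definition G n j := #|[set x : n.-tuple T | cnt x0 c x == j]|.

Lemma inner_sum (z : T) k j :
  \sum_(a : T) ((a != z) + k == j : nat) = (k == j) + (#|T| - 1) * (k.+1 == j).
Proof.
rewrite (bigD1 z) //= eqxx add0n; congr (_ + _).
rewrite (eq_bigr (fun _ => (k.+1 == j) : nat)); last by move=> a ->.
by rewrite sum_nat_const cardC1 subn1.
Qed.

Lemma G_rec n j : b <= n ->
  G n.+1 j = G n j + (#|T| - 1) * (if j is j'.+1 then G n j' else 0).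
Proof.
move=> hn; rewrite /G !card_sum sum_tuple_cons exchange_big /=.
rewrite (eq_bigr (fun t : n.-tuple T => (cnt x0 c t == j) + (#|T| - 1) * ((cnt x0 c t).+1 == j))); last first.
  move=> t _; under eq_bigr => a _ do rewrite cnt_cons ?size_tuple //.
  exact: inner_sum.
rewrite big_split /= -big_distrr /=; congr (_ + _ * _).
case: j => [|j]; first by rewrite big1.
by rewrite card_sum; apply: eq_bigr => t _; rewrite eqSS.
Qed.

Lemma G_base j : G b j = if j == 0 then #|T| ^ b else 0.
Proof.
rewrite /G.
have e : forall x : b.-tuple T, cnt x0 c x = 0.
  by move=> x; rewrite /cnt size_tuple subnn.
case: j => [|j] /=.
  rewrite -card_tuple; apply: eq_card => x; rewrite !inE e.
  by [].
apply/eqP; rewrite cards_eq0; apply/eqP/setP => x; rewrite !inE e.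
by [].
Qed.

Lemma G_formula m j : G (b + m) j = #|T| ^ b * (#|T| - 1) ^ j * 'C(m, j).
Proof.
elim: m j => [|m IH] j.
  rewrite addn0 G_base bin0n; case: j => [|j] /=; first by rewrite expn0 !muln1.
  by rewrite muln0.
rewrite addnS G_rec ?leq_addr //.
case: j => [|j]; first by rewrite IH !bin0 muln0 addn0.
rewrite !IH binS !expnS; set q := #|T| - 1; set Q := #|T| ^ b.
rewrite mulnDr; congr (_ + _); nia.
Qed.
End C.

Theorem lemma4p4 (q n b i : nat) :
  1 <= b -> 2 <= q -> b + 1 <= n -> 1 <= i <= n - b + 1 ->
  #|[set x : n.-tuple 'I_q | size (D1b b (x : seq 'I_q)) == i]| =
  q ^ b * (q - 1) ^ (i - 1) * 'C(n - b, i - 1).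
Proof.
case: b => [|c] // _ hq hn /andP [hi _].
have q0 : 0 < q by apply: leq_trans hq.
pose x0 : 'I_q := Ordinal q0.
have -> : #|[set x : n.-tuple 'I_q | size (D1b c.+1 (x : seq 'I_q)) == i]| =
          G x0 c n (i - 1).
  rewrite /G; apply: eq_card => x; rewrite !inE D1bE (sizeL x0) ?size_tuple;
    last by apply: leq_trans hn; rewrite addn1.
  by case: i hi => // i _; rewrite subn1 eqSS.
have hb : c.+1 <= n by apply: leq_trans hn; rewrite addn1.
have := G_formula x0 c (n - c.+1) (i - 1).
rewrite subnKC // card_ord => ->.
by [].
Qed.
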